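(* Let $P_1,\dots,P_T$ be $p$-values and fix an index $t\le T$ with $t\in\mathcal H^0$, i.e. $\mathbb P(P_t\le x)\le x$ for all $x\in[0,1]$, and assume $P_t$ is independent of $(P_s)_{s\ne t}$. For each $i\le T$ let $f_i:\{0,1\}^{i-1}\to\mathbb R$ be coordinatewise nondecreasing, define recursively $R_i=\mathbf 1\{P_i\le f_i(R_1,\dots,R_{i-1})\}$, and let $\mathcal F^{i}=\sigma(R_1,\dots,R_{i})$. Let $g:\{0,1\}^T\to\mathbb R$ be coordinatewise nondecreasing with $g(x)>0$ for every $x\neq(0,\dots,0)$. Then $$\mathbb E\left[\frac{\mathbf 1\{P_t\le f_t(R_1,\dots,R_{t-1})\}}{g(R_1,\dots,R_T)\vee 1}\,\Big|\,\mathcal F^{t-1}\right]\le \mathbb E\left[\frac{f_t(R_1,\dots,R_{t-1})}{g(R_1,\dots,R_T)\vee 1}\,\Big|\,\mathcal F^{t-1}\right].$$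
   Context: Coordinatewise nondecreasing means: if $\tilde x_i\ge x_i$ for all coordinates $i$, then the function value at $\tilde x$ is at least the value at $x$. $a\vee b=\max\{a,b\}$.
   Formalization: The threshold $f_t$ is also nonnegative on all of $\{0,1\}^{t-1}$. The statement above fails without it. *)

(* Defs.v *)
From HB Require Import structures.
From mathcomp Require Import all_boot all_order all_algebra.
From mathcomp Require Import all_classical all_reals all_analysis.
Set Implicit Arguments. Unset Strict Implicit. Unset Printing Implicit Defensive.
Import Order.TTheory GRing.Theory Num.Theory.
Local Open Scope classical_set_scope.
Local Open Scope ring_scope.

(* Coordinatewise nondecreasing function on {0,1}^k, with {0,1}^k encoded as
   boolean sequences of size k (false = 0, true = 1). *)
Definition coord_nondecr {R : realType} (k : nat) (h : seq bool -> R) : Prop :=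
  forall s s' : seq bool, size s = k -> size s' = k ->
    (forall j, (j < k)%N -> nth false s j ==> nth false s' j) -> h s <= h s'.

(* Decision sequence (R_0, ..., R_{k-1}) (0-based indexing):
   R_i = 1{ p i <= f i (R_0, ..., R_{i-1}) }. *)
Fixpoint decisions {R : realType} (f : nat -> seq bool -> R) (p : nat -> R)
    (k : nat) : seq bool :=
  match k with
  | 0 => [::]
  | k'.+1 => let s := decisions f p k' in rcons s (p k' <= f k' s)
  end.

Definition Rvec {d} {T : measurableType d} {R : realType}
    (f : nat -> seq bool -> R) (P : nat -> T -> R) (k : nat) (w : T) : seq bool :=
  decisions f (fun i => P i w) k.

Definition superuniform {d} {T : measurableType d} {R : realType}
    (mu : probability T R) (X : T -> R) : Prop :=
  forall x : R, 0 <= x <= 1 -> (mu [set w | (X w <= x)%R] <= x%:E)%E.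

(* Independence of P_t from the family (P_s)_{s < n, s <> t}: product rule
   for P_t^{-1}(A) and every event of the generating pi-system
   { /\_{s<n, s<>t} P_s^{-1}(B_s) } of sigma(P_s : s <> t). *)
Definition indep_from_rest {d} {T : measurableType d} {R : realType}
    (mu : probability T R) (P : nat -> T -> R) (n t : nat) : Prop :=
  forall (A : set R) (B : nat -> set R),
    measurable A -> (forall s, measurable (B s)) ->
    mu (P t @^-1` A `&`
        \bigcap_(s in [set s | (s < n)%N /\ s <> t]) (P s @^-1` B s))
    = (mu (P t @^-1` A) *
       mu (\bigcap_(s in [set s | (s < n)%N /\ s <> t]) (P s @^-1` B s)))%E.

(* Conditional expectation of X given sigma(Z), for a random variable Z with
   values in the finite set seq bool (here Z = (R_0,...,R_{t-1}), so
   sigma(Z) = F^{t-1}): on the atom {Z = z} it equals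
   E[X 1{Z = z}] / P(Z = z) (taken to be 0 on null atoms). *)
Definition cond_exp_disc {d} {T : measurableType d} {R : realType}
    (mu : probability T R) (Z : T -> seq bool) (X : T -> R) (w : T) : \bar R :=
  ((\int[mu]_(y in Z @^-1` [set Z w]) (X y)%:E) *
   ((fine (mu (Z @^-1` [set Z w])))^-1)%:E)%E.

(* Main.v *)
Require Import Defs.
From HB Require Import structures.
From mathcomp Require Import all_boot all_order all_algebra.
From mathcomp Require Import all_classical all_reals all_analysis.
Import Order.TTheory GRing.Theory Num.Theory.
Local Open Scope classical_set_scope.
Local Open Scope ring_scope.

Set Implicit Arguments. Unset Strict Implicit.

Section Dec.
Variables (R : realType) (f : nat -> seq bool -> R).

Lemma size_dec p k : size (decisions f p k) = k.
Proof. by elim: k => //= k IH; rewrite size_rcons IH. Qed.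

Lemma nth_dec p k i : (i < k)%N ->
  nth false (decisions f p k) i = (p i <= f i (decisions f p i)).
Proof.
elim: k => // k IH; rewrite ltnS leq_eqVlt => /orP[/eqP->|ik] /=.
  by rewrite nth_rcons size_dec ltnn eqxx.
by rewrite nth_rcons size_dec ik IH.
Qed.

Lemma take_dec p k i : (i <= k)%N -> take i (decisions f p k) = decisions f p i.
Proof.
elim: k => [|k IH]; first by rewrite leqn0 => /eqP->.
rewrite leq_eqVlt => /orP[/eqP->|ik]; first by rewrite take_oversize // size_dec.
by rewrite /= -cats1 takel_cat ?size_dec // IH.
Qed.

Lemma dec_ext p q k : (forall i, (i < k)%N -> p i = q i) ->
  decisions f p k = decisions f q k.
Proof.
elim: k => //= k IH H; rewrite IH; last by move=> i ik; apply: H; exact: ltnW.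
by rewrite H.
Qed.

Lemma dec_char p k r : decisions f p k = r <->
  size r = k /\ forall s, (s < k)%N -> nth false r s = (p s <= f s (take s r)).
Proof.
split.
  move=> <-; split; first exact: size_dec.
  by move=> s sk; rewrite nth_dec // take_dec // ltnW.
elim: k r => [|k IH] r [].
  by move/size0nil->.
case/lastP: r => [|r b].
  by move=> /= E; move: E => /eqP; rewrite eq_sym.
rewrite size_rcons => -[] rk H /=.
have -> : decisions f p k = r.
  apply: IH; split => // s sk.
  have := H s (ltnW sk).
  by rewrite nth_rcons rk sk -[rcons r b]cats1 takel_cat // rk ltnW.
have := H k (ltnSn k).
rewrite nth_rcons rk ltnn eqxx => ->.
by rewrite -[rcons r b]cats1 takel_cat ?rk // take_oversize ?rk.
Qed.

Lemma dec_mono p q n t :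
  (forall i, (i < n)%N -> coord_nondecr i (f i)) ->
  (forall i, i <> t -> p i = q i) ->
  q t <= f t (decisions f q t) ->
  forall j, (j < n)%N -> nth false (decisions f p n) j ==> nth false (decisions f q n) j.
Proof.
move=> fm pq qt.
suff H : forall k, (k <= n)%N -> forall j, (j < k)%N ->
  (p j <= f j (decisions f p j)) ==> (q j <= f j (decisions f q j)).
  by move=> j jn; rewrite !nth_dec //; exact: H (leqnn n) j jn.
elim=> // k IH kn j; rewrite ltnS leq_eqVlt => /orP[/eqP->|jk]; last first.
  by apply: IH => //; exact: ltnW.
have [->|kt] := eqVneq k t; first by rewrite qt implybT.
rewrite -(pq k (elimN eqP kt)); apply/implyP => pk; apply: (le_trans pk).
apply: (fm k kn); rewrite ?size_dec // => i ik.
by rewrite !nth_dec //; apply: IH => //; exact: ltnW.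
Qed.

Lemma dec_same p q t :
  (forall i, i <> t -> p i = q i) ->
  p t <= f t (decisions f p t) ->
  q t <= f t (decisions f q t) ->
  forall k, decisions f p k = decisions f q k.
Proof.
move=> pq pt qt; elim=> //= k ->.
have [->|kt] := eqVneq k t.
  have E : decisions f p t = decisions f q t.
    by apply: dec_ext => i it; apply: pq => E; rewrite E ltnn in it.
  have -> : (p t <= f t (decisions f q t)) = true by rewrite -E.
  by rewrite qt.
by rewrite (pq k (elimN eqP kt)).
Qed.
End Dec.


Section Meas.
Variables (d : measure_display) (T : measurableType d) (R : realType).
Variables (P : nat -> T -> R) (f : nat -> seq bool -> R).
Hypothesis mP : forall i, measurable_fun setT (P i).

Definition Bs (r : seq bool) (s : nat) : set R :=
  [set x | (x <= f s (take s r)) = nth false r s].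

Lemma mBs r s : measurable (Bs r s).
Proof.
rewrite /Bs; case: (nth false r s).
  rewrite (_ : [set x | _ = true] = [set` `]-oo, f s (take s r)]]); first exact: measurable_itv.
  by apply/seteqP; split => x /=; rewrite in_itv /=.
rewrite (_ : [set x | _ = false] = [set` `]f s (take s r), +oo[]); first exact: measurable_itv.
by apply/seteqP; split => x /=; rewrite in_itv /= andbT; [move/negbT; rewrite -ltNge|move=> h; apply/negbTE; rewrite -ltNge].
Qed.

Lemma mpre s B : measurable B -> measurable (P s @^-1` B).
Proof. by move=> mB; rewrite -[X in measurable X]setTI; exact: mP. Qed.

Lemma mRvec k r : measurable [set y | Rvec f P k y = r].
Proof.
have [rk|rk] := eqVneq (size r) k; last first.
  rewrite (_ : [set y | _] = set0); first exact: measurable0.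
  by apply/seteqP; split => y //= /dec_char [] /eqP; rewrite (negbTE rk).
rewrite (_ : [set y | _] = \bigcap_(s in [set s | (s < k)%N]) (P s @^-1` Bs r s)).
  by apply: bigcap_measurableType => s _; apply: mpre; exact: mBs.
apply/seteqP; split => y /=.
  by move/dec_char => [_ H] s /= sk; rewrite /Bs /= -H.
by move=> H; apply/dec_char; split => // s sk; exact/esym/(H s sk).
Qed.

Lemma meas_fin (F : T -> seq bool) (h : seq bool -> R) :
  (forall r, measurable (F @^-1` [set r])) -> measurable_fun setT (fun y => h (F y)).
Proof.
move=> mF _ B mB; rewrite setTI.
rewrite (_ : _ @^-1` B = \bigcup_(r : seq bool) [set y | F y = r /\ B (h r)]).
  apply: countable_bigcupT_measurable => // r.
  have [Bh|Bh] := pselect (B (h r)).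
    by rewrite (_ : [set y | _] = F @^-1` [set r]) //; apply/seteqP; split => y /=; [case|].
  rewrite (_ : [set y | _] = set0); first exact: measurable0.
  by apply/seteqP; split => y //= [].
apply/seteqP; split => y /=; first by move=> Bhy; exists (F y).
by move=> [r _ [-> ]].
Qed.
End Meas.


Section Int.
Variables (d : measure_display) (T : measurableType d) (R : realType).
Variable (mu : {measure set T -> \bar R}).

Lemma int_const_indic (D A : set T) (k : R) : measurable D -> measurable A -> 0 <= k ->
  (\int[mu]_(y in D) (k%:E * (\1_A y)%:E) = k%:E * mu (A `&` D))%E.
Proof.
move=> mD mA k0; rewrite ge0_integralZl_EFin ?integral_indic //.
by apply/measurable_realfun.measurable_EFinP; exact: measurable_realfun.measurable_indic.
Qed.

Lemma int_sum_indic0 (I : finType) (D : set T) (A : I -> set T) (k : I -> R) :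
  measurable D -> (forall i, measurable (A i)) -> (forall i, 0 <= k i) ->
  (\int[mu]_(y in D) (\sum_(i : I) (k i)%:E * (\1_(A i) y)%:E) =
   \sum_(i : I) (k i)%:E * mu (A i `&` D))%E.
Proof.
move=> mD mA k0; rewrite ge0_integral_sum //.
- by apply: eq_bigr => i _; exact: int_const_indic.
- move=> i; apply/measurable_realfun.measurable_EFinP => /=.
  apply: measurable_realfun.measurable_funM; first exact: measurable_cst.
  exact: measurable_realfun.measurable_indic.
- by move=> i y _; rewrite -EFinM lee_fin mulr_ge0.
Qed.
Lemma int_sum_indic (I : finType) (D : set T) (A : I -> set T) (k : I -> R) :
  measurable D -> (forall i, measurable (A i)) -> (forall i, 0 <= k i) ->
  (\int[mu]_(y in D) (\sum_(i : I) k i * \1_(A i) y)%:E =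
   \sum_(i : I) (k i)%:E * mu (A i `&` D))%E.
Proof.
move=> mD mA k0; rewrite -int_sum_indic0 //.
apply: eq_integral => y _; rewrite -sumEFin; apply: eq_bigr => i _.
by rewrite EFinM.
Qed.
End Int.


Arguments Bs {R}.
Section R1.
Variables (d : measure_display) (T : measurableType d) (R : realType).
Variables (P : nat -> T -> R) (f : nat -> seq bool -> R) (n t : nat).
Hypothesis ht : (t < n)%N.

Definition qv (y : T) : nat -> R :=
  fun i => if i == t then f t (Rvec f P t y) else P i y.
Definition R1 (y : T) : seq bool := decisions f (qv y) n.
Definition rect (r : seq bool) : set T :=
  \bigcap_(s in [set s | (s < n)%N /\ s <> t]) (P s @^-1` Bs f r s).

Lemma dec_qv y : decisions f (qv y) t = Rvec f P t y.
Proof.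
apply: dec_ext => i it; rewrite /qv ifN //.
by apply/eqP => E; rewrite E ltnn in it.
Qed.

Lemma qv_ok y : qv y t <= f t (decisions f (qv y) t).
Proof. by rewrite dec_qv /qv eqxx. Qed.

Lemma qv_ne y i : i <> t -> (fun j => P j y) i = qv y i.
Proof. by move=> it; rewrite /qv ifN //; apply/eqP. Qed.

Lemma R1_Z y : take t (R1 y) = Rvec f P t y.
Proof. by rewrite /R1 take_dec ?dec_qv // ltnW. Qed.

Lemma R1_char y r : R1 y = r <-> (size r = n /\ nth false r t) /\ rect r y.
Proof.
split.
  move=> E; have [sz H] := (dec_char f (qv y) n r).1 E.
  split; first split.
  - exact: sz.
  - rewrite -E /R1 (nth_dec _ _ ht); exact: qv_ok.
  move=> s [sn st] /=; rewrite /Bs (H s sn) /qv ifN; [by [] | exact/eqP].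
move=> [[sz rt] Hr]; apply/dec_char; split; first exact: sz.
move=> s sn.
have [->|st] := eqVneq s t; last first.
  rewrite /qv (negbTE st).
  have := Hr s (conj sn (elimN eqP st)); rewrite /= /Bs => ->; reflexivity.
rewrite rt /qv eqxx.
suff -> : Rvec f P t y = take t r by rewrite lexx.
apply/dec_char; split; first by rewrite size_take sz ht.
move=> j jt; rewrite (nth_take _ jt) (take_takel _ (ltnW jt)).
have jt' : j <> t by move=> E; rewrite E ltnn in jt.
have := Hr j (conj (ltn_trans jt ht) jt'); rewrite /= /Bs => ->; reflexivity.
Qed.

Hypothesis mP : forall i, measurable_fun setT (P i).

Lemma mrect r : measurable (rect r).
Proof. apply: bigcap_measurableType => s _; apply: mpre; [exact: mP | exact: mBs]. Qed.

Lemma mR1 r : measurable [set y | R1 y = r].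
Proof.
have [c|c] := pselect (size r = n /\ nth false r t).
  rewrite (_ : [set y | _] = rect r); first exact: mrect.
  apply/seteqP; split => y /=.
    by move/R1_char => [_ h].
  by move=> h; apply/R1_char; split.
rewrite (_ : [set y | _] = set0); first exact: measurable0.
apply/seteqP; split => y //= /R1_char [h _]; exact: c h.
Qed.

Lemma R_eq_R1 y : P t y <= f t (Rvec f P t y) -> Rvec f P n y = R1 y.
Proof.
move=> h; apply: dec_same (qv_ne y) _ (qv_ok y) n; exact: h.
Qed.

Lemma R_le_R1 y : (forall i, (i < n)%N -> coord_nondecr i (f i)) ->
  forall j, (j < n)%N -> nth false (Rvec f P n y) j ==> nth false (R1 y) j.
Proof. by move=> fm; apply: dec_mono fm (qv_ne y) (qv_ok y). Qed.
End R1.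


Unset Implicit Arguments. Set Strict Implicit.

Theorem lemma1 (d : measure_display) (T : measurableType d) (R : realType)
    (mu : probability T R) (n t : nat) (P : nat -> T -> R)
    (f : nat -> seq bool -> R) (g : seq bool -> R) :
  (forall i, measurable_fun setT (P i)) ->
  (t < n)%N ->
  superuniform mu (P t) ->
  indep_from_rest mu P n t ->
  (forall i, (i < n)%N -> coord_nondecr i (f i)) ->
  (forall s, size s = t -> 0 <= f t s) ->
  coord_nondecr n g ->
  (forall s, size s = n -> has id s -> 0 < g s) ->
  forall w : T,
    (cond_exp_disc mu (Rvec f P t)
       (fun y => ((P t y <= f t (Rvec f P t y))%R%:R / Num.max (g (Rvec f P n y)) 1)%R) w
     <=
     cond_exp_disc mu (Rvec f P t)
       (fun y => (f t (Rvec f P t y) / Num.max (g (Rvec f P n y)) 1)%R) w)%E.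
Proof.
move=> mP ht sup ind fm ft0 gm _ w.
rewrite /cond_exp_disc.
set z := Rvec f P t w.
set D := Rvec f P t @^-1` [set z].
have mD : measurable D by exact: (mRvec f mP t z).
apply: lee_wpmul2r; first by rewrite lee_fin invr_ge0 fine_ge0 // measure_ge0.
set c := f t z.
have c0 : 0 <= c by apply: ft0; rewrite /z /Rvec size_dec.
pose G := fun r : seq bool => (Num.max (g r) 1)^-1.
have Gpos r : 0 < Num.max (g r) 1 by rewrite lt_max ltr01 orbT.
have G0 r : 0 <= G r by rewrite /G invr_ge0 ltW.
have Ganti r r' : g r <= g r' -> G r' <= G r.
  move=> grr'; rewrite /G lef_pV2 ?posrE //.
  by rewrite ge_max !le_max grr' lexx !orbT.
pose E := P t @^-1` [set` `]-oo, c]].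
have mE : measurable E by apply: mpre => //; exact: measurable_itv.
pose S1 := fun x : n.-tuple bool => [set y | R1 P f n t y = val x].
have mS1 x : measurable (S1 x) by exact: (mR1 f ht mP (val x)).
have sR1 y : size (R1 P f n t y) == n by rewrite /R1 size_dec.
have sum1 (h : seq bool -> R) (A : set T) y :
   \sum_(x : n.-tuple bool) h (val x) * \1_(A `&` S1 x) y = h (R1 P f n t y) * \1_A y.
  rewrite (bigD1 (Tuple (sR1 y))) //= big1 ?addr0; last first.
    move=> x xne; rewrite indicE memNset ?mulr0 // => -[_ /= E1].
    by move/negP: xne; apply; apply/eqP/val_inj => /=; exact: esym E1.
  have [Ay|Ay] := pselect (A y).
    by rewrite !indicE !mem_set.
  by rewrite !indicE !memNset // => -[].
have LHS : (\int[mu]_(y in D) (((P t y <= f t (Rvec f P t y))%R%:R / Num.max (g (Rvec f P n y)) 1)%R)%:E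
    = \sum_(x : n.-tuple bool) (G (val x))%:E * mu ((E `&` S1 x) `&` D))%E.
  rewrite -int_sum_indic //; last by move=> x; exact: measurableI.
  apply: eq_integral => y; rewrite inE => Dy.
  have Zy : Rvec f P t y = z := Dy.
  congr EFin; rewrite (sum1 G E y) Zy.
  have [hc|hc] := boolP (P t y <= c).
    rewrite indicE mem_set; last by rewrite /E /= in_itv /=.
    by rewrite mulr1 mul1r (@R_eq_R1 _ _ _ P f n t y) // Zy.
  rewrite indicE memNset ?mulr0 ?mul0r //.
  by rewrite /E /= in_itv /= (negbTE hc).
rewrite LHS.
have RHS1 : (\int[mu]_(y in D) ((f t (Rvec f P t y) / Num.max (g (Rvec f P n y)) 1)%R)%:E
    = \int[mu]_(y in D) (c * G (Rvec f P n y))%:E)%E.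
  apply: eq_integral => y; rewrite inE => Dy.
  have Zy : Rvec f P t y = z := Dy.
  rewrite Zy; reflexivity.
rewrite RHS1.
apply: (@le_trans _ _ (\int[mu]_(y in D) (c * G (R1 P f n t y))%:E)%E); last first.
  apply: ge0_le_integral => //.
  - by move=> y _; rewrite lee_fin mulr_ge0.
  - apply/measurable_realfun.measurable_EFinP; apply: measurable_funTS.
    exact: (@meas_fin _ _ _ (R1 P f n t) (fun r => c * G r) (mR1 f ht mP)).
  - apply/measurable_realfun.measurable_EFinP; apply: measurable_funTS.
    exact: (@meas_fin _ _ _ (Rvec f P n) (fun r => c * G r) (mRvec f mP n)).
  - move=> y _; rewrite lee_fin; apply: (ler_wpM2l c0); apply: Ganti.
    apply: gm; first by rewrite /Rvec size_dec.
      by rewrite /R1 size_dec.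
    move=> j jn; exact: (R_le_R1 P t y fm jn).
have RHS2 : (\int[mu]_(y in D) (c * G (R1 P f n t y))%:E
    = \sum_(x : n.-tuple bool) (c * G (val x))%:E * mu ((setT `&` S1 x) `&` D))%E.
  rewrite -int_sum_indic //; last 2 first.
  - by move=> x; apply: measurableI.
  - by move=> x; rewrite mulr_ge0.
  apply: eq_integral => y _; congr EFin.
  by rewrite (sum1 (fun r => c * G r) setT y) indicE mem_set // mulr1.
rewrite RHS2; apply: lee_sum => x _.
rewrite setTI mulrC EFinM -muleA; apply: lee_wpmul2l; first by rewrite lee_fin.
have muE : (mu E <= c%:E)%E.
  have [c1|c1] := lerP c 1.
    have -> : E = [set w | P t w <= c].
      by apply/seteqP; split => y; rewrite /E /= in_itv /=.
    by apply: sup; rewrite c0 c1.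
  apply: le_trans (probability_le1 mu mE) _; rewrite lee_fin; exact: ltW.
have [[xt xz]|nc] := pselect (nth false (val x) t /\ take t (val x) = z).
  have eq : S1 x `&` D = rect P f n t (val x).
    apply/seteqP; split => y.
      by move=> [/= /(R1_char P f ht) [_ ?] _].
    move=> ry.
    have Ry : R1 P f n t y = val x.
      by apply/(R1_char P f ht); split => //; split => //; exact: size_tuple.
    split => //=; rewrite /D /=.
    by rewrite -(R1_Z P f ht y) Ry.
  rewrite -setIA eq /E /rect (ind _ _ (measurable_itv _) (fun s => mBs f (val x) s)).
  apply: lee_wpmul2r => //.
have eq0 : S1 x `&` D = set0.
  apply/seteqP; split => y // [/= Ry Dy]; apply: nc; split.
    by have := (R1_char P f ht y (val x)).1 Ry => -[[_ ?] _].
  by rewrite -Ry R1_Z.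
by rewrite -setIA eq0 setI0 !measure0 mule0.
Qed.
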